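(* Consider the Balancing with Conflicts game with $m=2$ machines. - If $n\ge4$, every strong Nash equilibrium $\vec s$ satisfies $c(\vec s)\le\left(\frac43+\frac{2}{3n}\right)c(\vec s^* )$. - If $n\le3$, every strong Nash equilibrium $\vec s$ satisfies $c(\vec s)=c(\vec s^* )$, i.e. the strong price of anarchy is $1$.
   Context: An instance of the Balancing with Conflicts (BwC) game consists of: - players $N=\{1,\dots,n\}$; - machines $M=\{1,\dots,m\}$; - a simple undirected graph $G=(N,E)$. A state is $\vec s\in M^n$, with $X_k(\vec s)=\{i:s_i=k\}$ and $x_k(\vec s)=|X_k(\vec s)|$. For $X\subseteq N$, $e(X)$ is the number of edges with both endpoints in $X$, and $e(\{i\},X)$ is the number of neighbours of $i$ in $X$. The cost of player $i$ with $s_i=k$ is $c_i(\vec s)=x_k(\vec s)+e(\{i\},X_k(\vec s))$. The social cost is $$c(\vec s)=\sum_ic_i(\vec s)=\sum_k\big(x_k(\vec s)^2+2e(X_k(\vec s))\big),$$ and $\vec s^*$ minimizes $c$. A state $\vec s$ is a strong Nash equilibrium if for every nonempty coalition $C\subseteq N$ and every joint deviation $\vec s_C'\in M^C$, some $i\in C$ has $c_i(\vec s)\le c_i(\vec s_C',\vec s_{-C})$. *)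

(* Defs.v *)
From mathcomp Require Import all_boot all_order.
Set Implicit Arguments. Unset Strict Implicit. Unset Printing Implicit Defensive.

Definition simple_graph n (E : rel 'I_n) : Prop :=
  irreflexive E /\ symmetric E.

Definition state n m := {ffun 'I_n -> 'I_m}.

Definition load n m (s : state n m) (k : 'I_m) : nat := #|[set j | s j == k]|.

Definition pcost n m (E : rel 'I_n) (s : state n m) (i : 'I_n) : nat :=
  load s (s i) + #|[set j | (s j == s i) && E i j]|.

Definition scost n m (E : rel 'I_n) (s : state n m) : nat :=
  \sum_(i < n) pcost E s i.

Definition deviate n m (s : state n m) (C : {set 'I_n}) (s' : state n m) : state n m :=
  [ffun i => if i \in C then s' i else s i].

Definition strongNE n m (E : rel 'I_n) (s : state n m) : Prop :=
  forall (C : {set 'I_n}) (s' : state n m), C != set0 ->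
    exists2 i, i \in C & pcost E s i <= pcost E (deviate s C s') i.

Definition optimal n m (E : rel 'I_n) (s : state n m) : Prop :=
  forall t : state n m, scost E s <= scost E t.

(* Main.v *)
Require Import Defs.
From mathcomp Require Import all_boot all_order.
From mathcomp Require Import zify.
Set Implicit Arguments. Unset Strict Implicit. Unset Printing Implicit Defensive.

Lemma two (x y z : 'I_2) : x != y -> (z == x) = (z != y).
Proof. by move: x y z; do 3! case=> [[|[|//]]] ?. Qed.

Lemma card_sumb n (A : {set 'I_n}) : #|A| = \sum_i (i \in A).
Proof. rewrite -sum1_card big_mkcond /=. by apply: eq_bigr => i _; case: (i \in A). Qed.

Lemma card_setP n (P : pred 'I_n) : #|[set j | P j]| = \sum_j P j.
Proof. rewrite card_sumb; apply: eq_bigr => j _; by rewrite inE. Qed.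

Lemma pcostE n m E (s : state n m) i :
  pcost E s i = \sum_j ((s j == s i) + ((s j == s i) && E i j)).
Proof. by rewrite /pcost /load !card_setP big_split. Qed.

Lemma scostE n m E (s : state n m) :
  scost E s = \sum_i \sum_j ((s j == s i) + ((s j == s i) && E i j)).
Proof. by apply: eq_bigr => i _; rewrite pcostE. Qed.

Lemma sum_add n (M : {set 'I_n}) k (f : 'I_n -> nat) : k \notin M ->
  \sum_i (i \in k |: M) * f i = f k + \sum_i (i \in M) * f i.
Proof.
move=> kM; rewrite (bigD1 k) //= [in RHS](bigD1 k) //= setU11 (negbTE kM) mul1n mul0n add0n.
congr (_ + _); apply: eq_bigr => i ik; by rewrite !inE (negbTE ik).
Qed.

Lemma dbl_add n (M : {set 'I_n}) k (P : 'I_n -> 'I_n -> nat) : k \notin M ->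
  \sum_i (i \in k |: M) * \sum_j (j \in k |: M) * P i j =
  P k k + \sum_j (j \in M) * P k j + \sum_i (i \in M) * P i k
  + \sum_i (i \in M) * \sum_j (j \in M) * P i j.
Proof.
move=> kM; rewrite sum_add // sum_add //.
rewrite [X in _ + X = _](eq_bigr (fun i => (i \in M) * P i k + (i \in M) * \sum_j (j \in M) * P i j)); last first.
  by move=> i _; rewrite sum_add // mulnDr.
rewrite big_split /=; lia.
Qed.

Lemma dsum_sym n (F G : 'I_n -> 'I_n -> nat) : (forall i j, F i j + F j i <= G i j + G j i) ->
  \sum_i \sum_j F i j <= \sum_i \sum_j G i j.
Proof.
move=> h.
have e : forall H : 'I_n -> 'I_n -> nat, \sum_i \sum_j (H i j + H j i) = 2 * \sum_i \sum_j H i j.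
  move=> H; under eq_bigr => i _ do rewrite big_split.
  by rewrite big_split /= [X in _ + X = _]exchange_big /= addnn mul2n.
rewrite -(leq_pmul2l (isT : 0 < 2)) -!e.
by apply: leq_sum => i _; apply: leq_sum => j _; apply: h.
Qed.

Lemma Bp (sj tj sk tk : 'I_2) (e jK : bool) : tk != sk -> (jK ==> (tj != sj)) ->
  (((if jK then tj else sj) == tk) : nat) + (((if jK then tj else sj) == tk) && e) + jK * (sj != sk)
  <= (sj != sk) + jK * (sj == sk) + (e && (tj == tk)) + ((~~jK) && (tj != sj)) * (e && (sj != sk)).
Proof. by move: sj tj sk tk; do 4! case=> [[|[|//]]] ?; case: e; case: jK. Qed.

Definition Ex n (E : rel 'I_n) (s : state n 2) (M : {set 'I_n}) :=
  \sum_i (i \in M) * \sum_j (j \in M) * (E i j && (s j != s i)).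
Definition Nd n (s : state n 2) (M : {set 'I_n}) :=
  \sum_i (i \in M) * \sum_j (j \in M) * (s j != s i).
Definition Ne n (s : state n 2) (M : {set 'I_n}) :=
  \sum_i (i \in M) * \sum_j (j \in M) * (s j == s i).
Definition gk n (E : rel 'I_n) (s t : state n 2) i :=
  \sum_j ((s j != s i) + (E i j && (t j == t i))).

Lemma dbl_add_sym n (M : {set 'I_n}) k (P : 'I_n -> 'I_n -> nat) : k \notin M ->
  (forall i j, P i j = P j i) ->
  \sum_i (i \in k |: M) * \sum_j (j \in k |: M) * P i j =
  P k k + 2 * \sum_j (j \in M) * P k j + \sum_i (i \in M) * \sum_j (j \in M) * P i j.
Proof.
move=> kM hP; rewrite dbl_add //.
rewrite (eq_bigr (fun i => (i \in M) * P k i) (fun i _ => congr1 _ (hP i k))).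
lia.
Qed.

Lemma Nd_add n (s : state n 2) (M : {set 'I_n}) k : k \notin M ->
  Nd s (k |: M) = 2 * \sum_j (j \in M) * (s j != s k) + Nd s M.
Proof.
move=> kM; rewrite /Nd (dbl_add_sym (P := fun i j => (s j != s i) : nat)) //= ?eqxx //.
by move=> i j; rewrite eq_sym.
Qed.

Lemma Ne_add n (s : state n 2) (M : {set 'I_n}) k : k \notin M ->
  Ne s (k |: M) = 1 + 2 * \sum_j (j \in M) * (s j == s k) + Ne s M.
Proof.
move=> kM; rewrite /Ne (dbl_add_sym (P := fun i j => (s j == s i) : nat)) //= ?eqxx //.
by move=> i j; rewrite eq_sym.
Qed.

Lemma Ex_add n E (hE : symmetric E) (s : state n 2) (M : {set 'I_n}) k : k \notin M ->
  Ex E s (k |: M) = 2 * \sum_j (j \in M) * (E k j && (s j != s k)) + Ex E s M.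
Proof.
move=> kM; rewrite /Ex (dbl_add_sym (P := fun i j => (E i j && (s j != s i)) : nat)) //= ?eqxx ?andbF //.
by move=> i j; rewrite eq_sym hE.
Qed.

Lemma chain n (E : rel 'I_n) (hE : symmetric E) (s t : state n 2) (hs : strongNE E s) :
  forall K : {set 'I_n}, K \subset [set i | t i != s i] ->
  2 * \sum_i (i \in K) * pcost E s i + Nd s K + Ex E s ([set i | t i != s i] :\: K)
  <= 2 * \sum_i (i \in K) * gk E s t i + Ne s K + #|K| + Ex E s [set i | t i != s i].
Proof.
set K0 := [set i | t i != s i].
move=> K; move: {2}#|K| (leqnn #|K|) => m.
elim: m K => [|m IH] K hK hsub.
all: case: (eqVneq K set0) => [->|Kn0].
1,3: by rewrite setD0 /Nd /Ne !big1 ?cards0 // => i _; rewrite inE.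
  by move: hK; rewrite leqn0 cards_eq0 (negbTE Kn0).
have [k kK hk] := hs K t Kn0.
have [K' eK kK'] : exists2 K', K = k |: K' & k \notin K'.
  by exists (K :\ k); [rewrite setD1K | rewrite setD11].
subst K.
have hk0 : t k != s k by move/subsetP: hsub => /(_ k (setU11 _ _)); rewrite inE.
set M := K0 :\: (k |: K').
have eM : K0 :\: K' = k |: M.
  apply/setP => i; rewrite !inE; case: (eqVneq i k) => [->|ik] //=.
  by rewrite kK' hk0.
have hM : k \notin M by rewrite !inE eqxx.
have cK : #|K'| <= m by move: hK; rewrite cardsU1 kK'.
have sK : K' \subset K0 by apply: subset_trans hsub; apply: subsetUr.
have IH' := IH K' cK sK.
rewrite eM Ex_add // in IH'.
have hB : pcost E (deviate s (k |: K') t) k + \sum_j (j \in k |: K') * (s j != s k)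
  <= \sum_j (s j != s k) + \sum_j (j \in k |: K') * (s j == s k)
     + \sum_j (E k j && (t j == t k)) + \sum_j (j \in M) * (E k j && (s j != s k)).
  rewrite pcostE -!big_split; apply: leq_sum => j _.
  rewrite !ffunE setU11 in_setD [j \in K0]inE.
  apply: Bp => //; apply/implyP => jK.
  by move/subsetP: hsub => /(_ j jK); rewrite inE.
rewrite !sum_add // eqxx /= in hB.
have gkE : gk E s t k = \sum_j (s j != s k) + \sum_j (E k j && (t j == t k)) by rewrite /gk big_split.
rewrite !sum_add // Nd_add // Ne_add // cardsU1 kK' gkE.
rewrite /=.
set d := \sum_j (j \in K') * (s j != s k) in hB *.
set e1 := \sum_j (j \in K') * (s j == s k) in hB *.
set X := \sum_j (s j != s k) in hB *.
set Y := \sum_j (E k j && (t j == t k)) in hB *.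
set A := \sum_j (j \in M) * (E k j && (s j != s k)) in hB IH' *.
set P1 := \sum_i (i \in K') * pcost E s i in IH' *.
set G1 := \sum_i (i \in K') * gk E s t i in IH' *.
set Q1 := Ex E s M in IH' *. set Q2 := Ex E s K0 in IH' *.
set Q3 := Nd s K' in IH' *. set Q4 := Ne s K' in IH' *.
set Q5 := pcost E s k in hk *. set Q6 := pcost E (deviate s (k |: K') t) k in hk hB.
set c := #|K'| in IH' *. clearbody d e1 X Y A P1 G1 Q1 Q2 Q3 Q4 Q5 Q6 c. lia.
Qed.

Definition Fp (a b c d : 'I_2) (e : bool) : nat :=
  ((c == a) + ((c == a) && e)) + 2 * ((b != a) * ((d != c) * (c == a)))
  + 2 * ((b != a) * ((c != a) + (e && (d == b)))) + (b != a) * ((d != c) * (e && (c != a))).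
Definition Gp (a b c d : 'I_2) (e : bool) : nat :=
  ((d == b) + ((d == b) && e)) + 3 * ((b != a) * ((d != c) * (c != a)))
  + 2 * ((b != a) * ((c == a) + ((c == a) && e))).

Lemma FG (a b c d : 'I_2) (e : bool) : Fp a b c d e + Fp c d a b e <= Gp a b c d e + Gp c d a b e.
Proof. by move: a b c d; do 4! case=> [[|[|//]]] ?; case: e. Qed.

Lemma dsplit n (F G : 'I_n -> 'I_n -> nat) :
  \sum_i \sum_j (F i j + G i j) = \sum_i \sum_j F i j + \sum_i \sum_j G i j.
Proof. under eq_bigr => i _ do rewrite big_split. by rewrite big_split. Qed.

Lemma dmul n c (F : 'I_n -> 'I_n -> nat) :
  \sum_i \sum_j (c * F i j) = c * \sum_i \sum_j F i j.
Proof. under eq_bigr => i _ do rewrite -big_distrr. by rewrite big_distrr. Qed.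

Lemma douter n (x : 'I_n -> nat) (F : 'I_n -> 'I_n -> nat) :
  \sum_i x i * \sum_j F i j = \sum_i \sum_j (x i * F i j).
Proof. by apply: eq_bigr => i _; rewrite big_distrr. Qed.

Lemma main n (E : rel 'I_n) (hE : symmetric E) (s t : state n 2) (hs : strongNE E s) :
  scost E s + Ne s [set i | t i != s i]
  <= scost E t + #|[set i | t i != s i]| + 2 * Nd s [set i | t i != s i].
Proof.
set K0 := [set i | t i != s i].
have hc := chain hE hs (subxx K0).
have Ex0 : Ex E s set0 = 0 by rewrite /Ex big1 // => i _; rewrite inE.
rewrite setDv Ex0 addn0 in hc.
have eF : scost E s + 2 * Ne s K0 + 2 * (\sum_i (i \in K0) * gk E s t i) + Ex E s K0
   = \sum_i \sum_j Fp (s i) (t i) (s j) (t j) (E i j).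
  rewrite scostE /Ne /Ex /gk !douter -!dmul -!dsplit.
  apply: eq_bigr => i _; apply: eq_bigr => j _; rewrite /Fp !inE; lia.
have eG : scost E t + 3 * Nd s K0 + 2 * (\sum_i (i \in K0) * pcost E s i)
   = \sum_i \sum_j Gp (s i) (t i) (s j) (t j) (E i j).
  under [in RHS]eq_bigr => i _ do rewrite /Gp.
  rewrite scostE /Nd.
  under [X in _ + _ * X]eq_bigr => i _ do rewrite pcostE.
  rewrite !douter -!dmul -!dsplit.
  apply: eq_bigr => i _; apply: eq_bigr => j _; rewrite !inE; lia.
have hF : \sum_i \sum_j Fp (s i) (t i) (s j) (t j) (E i j) <= \sum_i \sum_j Gp (s i) (t i) (s j) (t j) (E i j).
  by apply: dsum_sym => i j; rewrite (hE j i); apply: FG.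
move: hF; rewrite -eF -eG => hF.
rewrite -/K0 in hc.
set x1 := scost E s in hF *. set x2 := scost E t in hF *.
set x3 := Ne s K0 in hc hF *. set x4 := Nd s K0 in hc hF *.
set x5 := \sum_i (i \in K0) * gk E s t i in hc hF.
set x6 := \sum_i (i \in K0) * pcost E s i in hc hF.
set x7 := Ex E s K0 in hc hF. set x8 := #|K0| in hc *.
clearbody x1 x2 x3 x4 x5 x6 x7 x8. lia.
Qed.

Lemma eq2 (x y : 'I_2) : (x == y) = ((x == ord0) == (y == ord0)).
Proof. by move: x y; do 2! case=> [[|[|//]]] ?. Qed.

Lemma NeNd n (f : state n 2) (K : {set 'I_n}) :
  let q := \sum_j (j \in K) * (f j == ord0) in
  let r := \sum_j (j \in K) * (f j != ord0) in
  [/\ Ne f K = q * q + r * r, Nd f K = 2 * (q * r) & q + r = #|K|].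
Proof.
move=> q r.
have inner1 i : \sum_j (j \in K) * (f j == f i) = if f i == ord0 then q else r.
  rewrite /q /r; case hi: (f i == ord0); apply: eq_bigr => j _;
  by rewrite eq2 hi; case: (f j == ord0).
have inner2 i : \sum_j (j \in K) * (f j != f i) = if f i == ord0 then r else q.
  rewrite /q /r; case hi: (f i == ord0); apply: eq_bigr => j _;
  by rewrite eq2 hi; case: (f j == ord0).
have outer (a b : nat) : \sum_i (i \in K) * (if f i == ord0 then a else b) = q * a + r * b.
  rewrite /q /r !big_distrl -big_split /=; apply: eq_bigr => i _.
  by case: (f i == ord0); case: (i \in K); rewrite /= ?mul1n ?mul0n ?addn0.
split.
- by rewrite /Ne (eq_bigr _ (fun i _ => congr1 _ (inner1 i))) outer.
- by rewrite /Nd (eq_bigr _ (fun i _ => congr1 _ (inner2 i))) outer; lia.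
- rewrite card_sumb /q /r -big_split; apply: eq_bigr => j _.
  by case: (f j == ord0); case: (j \in K).
Qed.

Definition sw (x : 'I_2) : 'I_2 := if x == ord0 then ord_max else ord0.
Lemma sw_eq (x y : 'I_2) : (sw x == sw y) = (x == y).
Proof. by move: x y; do 2! case=> [[|[|//]]] ?. Qed.
Lemma sw_neq (x y : 'I_2) : (sw x != y) = (x == y).
Proof. by move: x y; do 2! case=> [[|[|//]]] ?. Qed.

Lemma scost_lb n (E : rel 'I_n) (t : state n 2) : n * n <= 2 * scost E t.
Proof.
have [h1 _ h3] := NeNd t [set: 'I_n].
have le : Ne t [set: 'I_n] <= scost E t.
  rewrite scostE /Ne; apply: leq_sum => i _; rewrite in_setT mul1n.
  apply: leq_sum => j _; rewrite in_setT mul1n; lia.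
move: h3 le; rewrite h1 cardsT card_ord.
set q := \sum_j _. set r := \sum_j _. clearbody q r.
have hh : 2 * (q * r) <= q * q + r * r.
  case: (leqP q r) => hqr.
    have [k ->] : exists k, r = q + k by exists (r - q); lia.
    nia.
  have [k ->] : exists k, q = r + k by exists (q - r); lia.
  nia.
nia.
Qed.

Lemma sq q r : 2 * (q * r) <= q * q + r * r.
Proof.
case: (leqP q r) => hqr.
  have [k ->] : exists k, r = q + k by exists (r - q); lia.
  nia.
have [k ->] : exists k, q = r + k by exists (q - r); lia.
nia.
Qed.

Lemma key n (E : rel 'I_n) (hE : symmetric E) (s t : state n 2) (hs : strongNE E s) :
  exists q r, [/\ scost E s + (q * q + r * r) <= scost E t + (q + r) + 4 * (q * r)
              & q + r = #|[set i | t i != s i]| ].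
Proof.
have := main hE t hs; have [h1 h2 h3] := NeNd s [set i | t i != s i].
rewrite h1 h2 -h3 => h; do 2 eexists; split; last reflexivity.
move: h; set q := \sum_j _; set r := \sum_j _; lia.
Qed.

Unset Implicit Arguments.

Theorem theorem14 (n : nat) (E : rel 'I_n) (hE : simple_graph E)
    (s sopt : state n 2) (hs : strongNE E s) (hopt : optimal E sopt) :
  (4 <= n -> 3 * n * scost E s <= (4 * n + 2) * scost E sopt) /\
  (n <= 3 -> scost E s = scost E sopt).
Proof.
have hsym : symmetric E by case: hE.
pose t2 : state n 2 := [ffun i => sw (sopt i)].
have c2 : scost E t2 = scost E sopt.
  rewrite !scostE; apply: eq_bigr => i _; apply: eq_bigr => j _; by rewrite !ffunE sw_eq.
have cc : #|[set i | sopt i != s i]| + #|[set i | t2 i != s i]| = n.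
  rewrite -[RHS](card_ord n) -(cardsC [set i | sopt i != s i]); congr (_ + _).
  by apply: eq_card => i; rewrite !inE ffunE sw_neq negbK.
have [t [ct hx]] : exists t : state n 2, scost E t = scost E sopt /\ 2 * #|[set i | t i != s i]| <= n.
  case: (leqP (2 * #|[set i | sopt i != s i]|) n) => h.
    by exists sopt.
  by exists t2; split => //; lia.
have [q [r [hk hqr]]] := key hsym t hs.
rewrite -hqr ct in hx hk.
have hlb := scost_lb E sopt.
have hle := hopt s.
move: hk hx hlb hle; set cs := scost E s; set C := scost E sopt => hk hx hlb hle.
split => hn.
- have hA : 8 * (q * r) <= (q + r) * (q + r) + 2 * (q * q + r * r).
    have := sq q r; nia.
  set x := q + r in hk hx hA.
  have h5 : 2 * cs <= 2 * C + 2 * x + x * x by nia.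
  have m1 : n * (2 * cs) <= n * (2 * C + 2 * x + x * x) by rewrite leq_mul2l h5 orbT.
  have m2 : n * (4 * (x * x)) <= n * (n * n).
    rewrite leq_mul2l; apply/orP; right. have := leq_mul hx hx. lia.
  have m3 : n * (2 * x) <= n * n by rewrite leq_mul2l hx orbT.
  have m4 : 4 * (n * n) <= n * (n * n) by rewrite leq_mul2r hn orbT.
  have m5 : (n + 2) * (n * n) <= (n + 2) * (2 * C) by rewrite leq_mul2l hlb orbT.
  nia.
- have h1 : q + r <= 1 by lia.
  have [e1 e2] : q * q + r * r = q + r /\ q * r = 0.
    by clear -h1; case: q h1 => [|[|q]]; case: r => [|[|r]].
  rewrite e1 e2 in hk; lia.
Qed.
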